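(* Let $R$ be an exchange ring in which $2$ is invertible, and let $a\in R$ be such that $a-a^3$ is regular. If the right $R$-modules $aR/ar(a^2)$ and $R/\big(aR+r(a)\big)$ are projective, then $(a-a^3)R\oplus ar(a^2)\cong (a-a^3)R\oplus R/\big(aR+r(a)\big)$ as right $R$-modules.
   Context: All rings are associative with identity; modules are right modules. An element $x\in R$ is regular if $x=xyx$ for some $y\in R$. $R$ is an exchange ring if for every $x\in R$ there is an idempotent $e\in xR$ with $1-e\in(1-x)R$. For $x\in R$, $r(x)=\{y\in R: xy=0\}$, and $ar(a^2)=\{ay: y\in r(a^2)\}$. *)

(* Defs.v *)
From HB Require Import structures.
From mathcomp Require Import all_boot all_order all_algebra.
Set Implicit Arguments. Unset Strict Implicit. Unset Printing Implicit Defensive.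
Import GRing.Theory.
Local Open Scope ring_scope.

Definition regular (R : pzRingType) (x : R) : Prop := exists y : R, x = x * y * x.

Definition exchange_ring (R : pzRingType) : Prop :=
  forall x : R, exists e : R,
    e * e = e /\ (exists r, e = x * r) /\ (exists s, 1 - e = (1 - x) * s).

Definition rann (R : pzRingType) (x : R) : R -> Prop := fun y => x * y = 0.

Definition rprin (R : pzRingType) (x : R) : R -> Prop := fun z => exists y, z = x * y.

Definition a_rann_a2 (R : pzRingType) (a : R) : R -> Prop :=
  fun z => exists y, rann (a ^+ 2) y /\ z = a * y.

Definition aR_plus_ra (R : pzRingType) (a : R) : R -> Prop :=
  fun z => exists y w, rann a w /\ z = a * y + w.

(* Right R-modules, presented as "setoid modules with a domain":       *)
(* a carrier type, a domain predicate (the elements of the module),    *)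
(* an equivalence (equality of the module) and the operations.         *)
(* This allows submodules (shrink dom) and quotients (coarsen eqv).    *)

Record rmod (R : pzRingType) := RMod {
  rm_car : Type;
  rm_dom : rm_car -> Prop;
  rm_eqv : rm_car -> rm_car -> Prop;
  rm_zero : rm_car;
  rm_add : rm_car -> rm_car -> rm_car;
  rm_opp : rm_car -> rm_car;
  rm_act : rm_car -> R -> rm_car
}.
Arguments rm_dom {R} _ _.
Arguments rm_eqv {R} _ _ _.
Arguments rm_zero {R} _.
Arguments rm_add {R} _ _ _.
Arguments rm_opp {R} _ _.
Arguments rm_act {R} _ _ _.

Definition is_rmod (R : pzRingType) (M : rmod R) : Prop :=
  let D := rm_dom M in let E := rm_eqv M in
  let add := rm_add M in let opp := rm_opp M in let act := rm_act M in
  let z := rm_zero M in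
  D z /\ (forall x y, D x -> D y -> D (add x y)) /\ (forall x, D x -> D (opp x)) /\
  (forall x r, D x -> D (act x r)) /\
  (forall x, D x -> E x x) /\ (forall x y, D x -> D y -> E x y -> E y x) /\
  (forall x y w, D x -> D y -> D w -> E x y -> E y w -> E x w) /\
  (forall x x' y y', D x -> D x' -> D y -> D y' -> E x x' -> E y y' ->
     E (add x y) (add x' y')) /\
  (forall x x', D x -> D x' -> E x x' -> E (opp x) (opp x')) /\
  (forall x x' r, D x -> D x' -> E x x' -> E (act x r) (act x' r)) /\
  (forall x y w, D x -> D y -> D w -> E (add x (add y w)) (add (add x y) w)) /\
  (forall x y, D x -> D y -> E (add x y) (add y x)) /\
  (forall x, D x -> E (add z x) x) /\
  (forall x, D x -> E (add (opp x) x) z) /\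
  (forall x, D x -> E (act x 1) x) /\
  (forall x r s, D x -> E (act x (r * s)) (act (act x r) s)) /\
  (forall x r s, D x -> E (act x (r + s)) (add (act x r) (act x s))) /\
  (forall x y r, D x -> D y -> E (act (add x y) r) (add (act x r) (act y r))).

Definition rhom (R : pzRingType) (M N : rmod R) (f : rm_car M -> rm_car N) : Prop :=
  (forall x, rm_dom M x -> rm_dom N (f x)) /\
  (forall x y, rm_dom M x -> rm_dom M y -> rm_eqv M x y -> rm_eqv N (f x) (f y)) /\
  (forall x y, rm_dom M x -> rm_dom M y ->
     rm_eqv N (f (rm_add M x y)) (rm_add N (f x) (f y))) /\
  (forall x r, rm_dom M x -> rm_eqv N (f (rm_act M x r)) (rm_act N (f x) r)).

Definition rm_iso (R : pzRingType) (M N : rmod R) : Prop :=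
  exists (f : rm_car M -> rm_car N) (g : rm_car N -> rm_car M),
    rhom f /\ rhom g /\
    (forall x, rm_dom M x -> rm_eqv M (g (f x)) x) /\
    (forall y, rm_dom N y -> rm_eqv N (f (g y)) y).

Definition projective (R : pzRingType) (P : rmod R) : Prop :=
  forall (M N : rmod R), is_rmod M -> is_rmod N ->
  forall (p : rm_car M -> rm_car N) (f : rm_car P -> rm_car N),
    rhom p -> rhom f ->
    (forall y, rm_dom N y -> exists x, rm_dom M x /\ rm_eqv N (p x) y) ->
    exists h : rm_car P -> rm_car M,
      rhom h /\ (forall x, rm_dom P x -> rm_eqv N (p (h x)) (f x)).

(* the subquotient N/K of R_R, for right ideals K <= N of R *)
Definition rsubq (R : pzRingType) (N K : R -> Prop) : rmod R :=
  @RMod R R N (fun x y => K (x - y)) 0 (fun x y => x + y) (fun x => - x)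
    (fun x r => x * r).

Definition ideal_mod (R : pzRingType) (I : R -> Prop) : rmod R :=
  rsubq I (fun x => x = 0).

Definition dsum (R : pzRingType) (M N : rmod R) : rmod R :=
  @RMod R (rm_car M * rm_car N)%type
    (fun p => rm_dom M p.1 /\ rm_dom N p.2)
    (fun p q => rm_eqv M p.1 q.1 /\ rm_eqv N p.2 q.2)
    (rm_zero M, rm_zero N)
    (fun p q => (rm_add M p.1 q.1, rm_add N p.2 q.2))
    (fun p => (rm_opp M p.1, rm_opp N p.2))
    (fun p r => (rm_act M p.1 r, rm_act N p.2 r)).
Arguments rsubq {R} N K.
Arguments ideal_mod {R} I.
Arguments dsum {R} M N.

(* Main.v *)
Require Import Defs.
From mathcomp Require Import all_boot all_order all_algebra.
Import GRing.Theory.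
Local Open Scope ring_scope.

Lemma is_rmod_rsubq (R : pzRingType) (N K : R -> Prop) :
  N 0 -> (forall x y, N x -> N y -> N (x + y)) -> (forall x, N x -> N (- x)) ->
  (forall x r, N x -> N (x * r)) ->
  K 0 -> (forall x y, K x -> K y -> K (x + y)) -> (forall x, K x -> K (- x)) ->
  (forall x r, K x -> K (x * r)) -> is_rmod (rsubq N K).
Proof.
move=> N0 ND NN NM K0 KD KN KM.
have K0' : forall e : R, e = 0 -> K e by move=> e ->.
rewrite /is_rmod /=.
split=> //; split=> //; split=> //; split=> //.
split; first by move=> x _; apply: K0'; rewrite subrr.
split; first by move=> x y _ _ /KN; rewrite opprB.
split; first by move=> x y w _ _ _ h1 h2; have := KD _ _ h1 h2; rewrite addrA subrK.
split.
  move=> x x' y y' _ _ _ _ h1 h2; have := KD _ _ h1 h2.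
  by rewrite opprD addrACA.
split; first by move=> x x' _ _ /KN; rewrite opprD !opprK.
split; first by move=> x x' r _ _ /(KM _ r); rewrite mulrBl.
split; first by move=> x y w _ _ _; apply: K0'; rewrite addrA subrr.
split; first by move=> x y _ _; apply: K0'; rewrite [x + y]addrC subrr.
split; first by move=> x _; apply: K0'; rewrite add0r subrr.
split; first by move=> x _; apply: K0'; rewrite addNr subrr.
split; first by move=> x _; apply: K0'; rewrite mulr1 subrr.
split; first by move=> x r s _; apply: K0'; rewrite mulrA subrr.
split; first by move=> x r s _; apply: K0'; rewrite mulrDr subrr.
by move=> x y r _ _; apply: K0'; rewrite mulrDl subrr.
Qed.

Section TT.
Context (R : pzRingType) (a : R).
Let T := aR_plus_ra a.
Lemma T0 : T 0. Proof. by exists 0, 0; rewrite /rann !mulr0 addr0. Qed.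
Lemma TD x y : T x -> T y -> T (x + y).
Proof.
move=> [y1 [w1 [h1 ->]]] [y2 [w2 [h2 ->]]]; exists (y1 + y2), (w1 + w2).
by rewrite /rann mulrDr h1 h2 addr0 mulrDr addrACA.
Qed.
Lemma TN x : T x -> T (- x).
Proof.
move=> [y1 [w1 [h1 ->]]]; exists (- y1), (- w1).
by rewrite /rann mulrN h1 oppr0 mulrN opprD.
Qed.
Lemma TM x r : T x -> T (x * r).
Proof.
move=> [y1 [w1 [h1 ->]]]; exists (y1 * r), (w1 * r).
by rewrite /rann mulrA h1 mul0r mulrDl mulrA.
Qed.
Lemma Ta y : T (a * y). Proof. by exists y, 0; rewrite /rann mulr0 addr0. Qed.
Lemma Tk k : a * k = 0 -> T k. Proof. by move=> h; exists 0, k; rewrite /rann mulr0 add0r. Qed.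
Lemma TB x y : T x -> T y -> T (x - y).
Proof. by move=> hx hy; apply: TD => //; apply: TN. Qed.
End TT.

Lemma get_q (R : pzRingType) (a : R) :
  projective (rsubq (fun _ => True) (aR_plus_ra a)) ->
  exists q u k0 : R, q * q = q /\ q * a = 0 /\ (forall k, a * k = 0 -> q * k = 0) /\
    1 - q = a * u + k0 /\ a * k0 = 0.
Proof.
move=> HP.
have M1 : is_rmod (ideal_mod (fun _ : R => True)).
  apply: is_rmod_rsubq => //.
  - by move=> x y -> ->; rewrite addr0.
  - by move=> x ->; rewrite oppr0.
  - by move=> x r ->; rewrite mul0r.
have M2 : is_rmod (rsubq (fun _ : R => True) (aR_plus_ra a)).
  apply: is_rmod_rsubq => //; [exact: T0|exact: TD|exact: TN|exact: TM].
have := HP (ideal_mod (fun _ : R => True)) (rsubq (fun _ : R => True) (aR_plus_ra a))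
  M1 M2 id id.
case.
- split=> //=; split; first by move=> x y _ _ ->; apply: T0.
  rewrite /=; split.
    by move=> x y _ _; rewrite subrr; apply: T0.
  by move=> x r _; rewrite subrr; apply: T0.
- split=> //=; split; first by move=> x y _ _ h.
  rewrite /=; split.
    by move=> x y _ _; rewrite subrr; apply: T0.
  by move=> x r _; rewrite subrr; apply: T0.
- by move=> z _; exists z; split=> //=; rewrite subrr; apply: T0.
move=> h [[_ [heq [hadd hact]]] hsec] /=.
simpl in *.
have hz : forall z, h z = h 1 * z.
  by move=> z; have := hact 1 z I; rewrite mul1r => /eqP; rewrite subr_eq0 => /eqP.
set q := h 1.
have hT : forall z, aR_plus_ra a z -> q * z = 0.
  move=> z Tz; have := heq z 0 I I; rewrite subr0 => /(_ Tz).
  by rewrite (hz z) (hz 0) mulr0 subr0.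
have T1q : aR_plus_ra a (1 - q).
  by have := @TN R a _ (hsec 1 I); rewrite opprB.
have [u [k0 [hk0 e1]]] := T1q.
exists q, u, k0; split.
  by have := hT _ T1q; rewrite mulrBr mulr1 => /eqP; rewrite subr_eq0 => /eqP <-.
split; first by have := hT _ (@Ta R a 1); rewrite mulr1.
split; first by move=> k hk; apply: hT; apply: (@Tk R a).
by [].
Qed.

Section Core.
Context (R : pzRingType) (a b x y q u k0 : R).
Hypothesis hab : a * b = x.
Hypothesis hba : b * a = x.
Hypothesis hb : a * a + b = 1.
Hypothesis hx : x * y * x = x.
Hypothesis hqq : q * q = q.
Hypothesis hqa : q * a = 0.
Hypothesis hqk : forall k, a * k = 0 -> q * k = 0.
Hypothesis hq1 : 1 - q = a * u + k0.
Hypothesis hk0 : a * k0 = 0.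

Local Notation T := (aR_plus_ra a).

Lemma hqT z : T z -> q * z = 0.
Proof. move=> [y1 [w1 [h1 ->]]]. by rewrite mulrDr mulrA hqa mul0r (hqk _ h1) addr0. Qed.

Lemma CX : x * a = a * x.
Proof. by rewrite -{1}hab -mulrA hba. Qed.

Lemma injD v v' : x * v = a * x * v' -> T v.
Proof.
move=> e; exists (a * v + b * v'), (b * v - x * v'); split.
  by rewrite /rann mulrBr !mulrA hab e subrr.
rewrite mulrDr !mulrA hab (addrC (b * v)) addrA addrK -mulrDl hb mul1r.
by [].
Qed.

Lemma C1 : x * (1 - q) = a * x * u.
Proof.
by rewrite hq1 mulrDr -hba -(mulrA b a k0) hk0 mulr0 addr0 hba mulrA CX.
Qed.

Lemma EX w : x * y * (x * w) = x * w.
Proof. by rewrite mulrA hx. Qed.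

Lemma split1 z : x * q * z + x * (1 - q) * z = x * z.
Proof. by rewrite -mulrDl -mulrDr addrC subrK mulr1. Qed.

Lemma inX z w : z = a * x * w -> z = x * (a * w).
Proof. by move=> ->; rewrite -CX mulrA. Qed.

Lemma E1 z w : z = x * w -> x * y * z = z.
Proof. by move=> ->; rewrite EX. Qed.

Lemma Fq z v : z = a * x * v -> q * y * z = 0.
Proof.
move=> zv; have e1 := E1 _ _ (inX _ _ zv).
have e2 : x * (q * y * z) = a * x * (v - u * y * z).
  have := split1 (y * z); rewrite !mulrA e1 C1 => e3.
  by rewrite mulrBr -zv -{2}e3 !mulrA addrK.
by have := hqT _ (injD _ _ e2); rewrite !mulrA hqq.
Qed.

Lemma Fz z v : z = a * x * v -> a * x * u * y * z = z.
Proof.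
move=> zv; have e1 := E1 _ _ (inX _ _ zv).
have h : x * q * y * z = x * (q * y * z) by rewrite !mulrA.
by have := split1 (y * z); rewrite !mulrA e1 C1 h (Fq _ _ zv) mulr0 add0r.
Qed.

Lemma Fg z v : z = a * x * v -> a * x * (u * y * x * y) * z = z.
Proof.
move=> zv; have e1 := E1 _ _ (inX _ _ zv).
have h : a * x * (u * y * x * y) * z = a * x * u * y * (x * y * z) by rewrite !mulrA.
by rewrite h e1 (Fz _ _ zv).
Qed.
Lemma FGa z w0 v : z = a * (x * w0) + x * q * v ->
  x * y * z = z /\ x * q * y * z = x * q * v.
Proof.
move=> zv.
have zX : z = x * (a * w0 + q * v) by rewrite zv mulrDr !mulrA CX.
have e1 := E1 _ _ zX.
have e3 : x * q * y * z + x * (1 - q) * y * z = z.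
  by have := split1 (y * z); rewrite !mulrA e1.
have e5 : x * q * y * z = z - a * x * u * y * z.
  by rewrite -{2}e3 C1 addrK.
have e4 : x * (q * y * z - q * v) = a * x * (w0 - u * y * z).
  rewrite !mulrBr !mulrA e5 zv !mulrA.
  by rewrite addrAC addrK.
have := hqT _ (injD _ _ e4); rewrite mulrBr !mulrA hqq => /eqP; rewrite subr_eq0 => /eqP hq.
split=> //; have -> : x * q * y * z = x * (q * y * z) by rewrite !mulrA.
by rewrite hq mulrA.
Qed.

Lemma FG1 z w0 v : z = a * (x * w0) + x * q * v -> x * (1 - q) * y * z = a * (x * w0).
Proof.
move=> zv; have [e1 e2] := FGa _ _ _ zv.
have := split1 (y * z); rewrite !mulrA e1 e2 => e3.
have -> : x * (1 - q) * y * z = z - x * q * v.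
  by rewrite -{2}e3 (addrC (x * q * v)) addrK.
by rewrite zv addrK mulrA.
Qed.

Lemma FG2 z w0 v : z = a * (x * w0) + x * q * v -> T (y * z - v).
Proof.
move=> zv; have [e1 e2] := FGa _ _ _ zv.
have h1 : x * (y * z - q * v) = a * x * w0.
  by rewrite mulrBr !mulrA e1 zv addrK mulrA.
have h2 : T ((1 - q) * v).
  rewrite hq1 mulrDl -mulrA; apply: (@TD R a); first exact: (@Ta R a).
  by apply: (@Tk R a); rewrite mulrA hk0 mul0r.
have := @TB R a _ _ (injD _ _ h1) h2.
by rewrite mulrBl mul1r opprB addrA subrK.
Qed.
Lemma K0X y' : a * a * y' = 0 -> a * y' = x * y'.
Proof.
move=> h; have hb' : b = 1 - a * a by rewrite -hb (addrC (a * a)) addrK.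
by rewrite -hab hb' mulrBr mulr1 mulrBl -(mulrA a (a * a) y') h mulr0 subr0.
Qed.

Lemma GK w0 : exists y', a * a * y' = 0 /\ x * w0 - x * (u * y * x * y) * (a * (x * w0)) = a * y'.
Proof.
set m := w0 - u * y * x * y * (a * (x * w0)).
have hc : a * (x * m) = 0.
  rewrite /m mulrBr mulrBr !mulrA.
  have := Fg (a * x * w0) w0 erefl; rewrite !mulrA => ->.
  by rewrite subrr.
exists (b * m); split.
  by rewrite -mulrA (mulrA a b) hab hc.
by rewrite (mulrA a b) hab /m mulrBr !mulrA.
Qed.
Lemma GFa z w0 k y' : z = x * w0 -> k = a * y' -> a * a * y' = 0 ->
  a * (k + x * (u * y * x * y) * (x * (1 - q) * y * z)) = x * (1 - q) * y * z.
Proof.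
move=> zx -> h.
have e : x * (1 - q) * y * z = a * x * (u * y * z) by rewrite C1 !mulrA.
rewrite mulrDr mulrA h e !mulrA add0r.
by have := Fg (a * x * (u * y * z)) (u * y * z) erefl; rewrite !mulrA.
Qed.

Lemma iso_core : rm_iso (dsum (ideal_mod (rprin x)) (ideal_mod (a_rann_a2 a)))
  (dsum (ideal_mod (rprin x)) (rsubq (fun _ => True) (aR_plus_ra a))).
Proof.
set t := u * y * x * y.
exists (fun p => (p.2 + x * t * (x * (1 - q) * y * p.1), y * p.1)).
exists (fun p => (a * p.1 + x * q * p.2, p.1 - x * t * (a * p.1))).
have T0' := @T0 R a.
have e0 : forall e : R, e = 0 -> e = 0 by [].
split.
  split.
    move=> [z k] /= [[w0 ->] [y' [hy' ->]]]; split=> //.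
    have hy2 : a * a * y' = 0 by rewrite -expr2.
    exists (y' + t * (x * (1 - q) * y * (x * w0))).
    by rewrite (mulrDr x y') (K0X _ hy2) /t !mulrA.
  split.
    move=> [z k] [z' k'] /= _ _ [/subr0_eq -> /subr0_eq ->].
    by rewrite !subrr; split=> //.
  split.
    move=> [z k] [z' k'] /= _ _; rewrite !mulrDr !mulrA; split; last by rewrite subrr.
    by rewrite addrACA subrr.
  move=> [z k] r /= _; rewrite mulrDl !mulrA !subrr; split=> //.
split.
  split.
    move=> [w v] /= [[w0 ->] _]; split.
      by exists (a * w0 + q * v); rewrite mulrDr !mulrA CX.
    have [y' [h1 h2]] := GK w0; exists y'; split.
      by rewrite /rann expr2.
    by rewrite /t.
  split.
    move=> [w v] [w' v'] /= _ _ [/subr0_eq -> e2].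
    rewrite subrr; split=> //.
    have := hqT _ e2; rewrite mulrBr => /subr0_eq h.
    by rewrite -!(mulrA x q) h subrr.
  split.
    move=> [z k] [z' k'] /= _ _; rewrite !mulrDr !mulrA; split.
      by rewrite addrACA subrr.
    by rewrite opprD addrACA subrr.
  move=> [z k] r /= _; rewrite mulrDl mulrBl !mulrA !subrr; split=> //.
split.
  move=> [z k] /= [[w0 ->] [y' [hy' ->]]].
  have hy2 : a * a * y' = 0 by rewrite -expr2.
  rewrite /t (GFa _ _ _ _ erefl erefl hy2) -/t; split.
    have e2 : x * (y * (x * w0)) = x * w0 by rewrite mulrA EX.
    have := split1 (y * (x * w0)); rewrite e2 !mulrA => e.
    by rewrite (addrC (x * (1 - q) * y * x * w0)) e subrr.
  by rewrite addrK subrr.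
move=> [w v] /= [[w0 ->] _]; split.
  rewrite (FG1 _ _ _ erefl) subrK; exact: subrr.
exact: (FG2 _ _ _ erefl).
Qed.
End Core.
Theorem lemma3p3 (R : pzRingType) (a : R) :
  exchange_ring R ->
  (exists u : R, 2%:R * u = 1 /\ u * 2%:R = 1) ->
  regular (a - a ^+ 3) ->
  projective (rsubq (rprin a) (a_rann_a2 a)) ->
  projective (rsubq (fun _ => True) (aR_plus_ra a)) ->
  rm_iso (dsum (ideal_mod (rprin (a - a ^+ 3))) (ideal_mod (a_rann_a2 a)))
         (dsum (ideal_mod (rprin (a - a ^+ 3))) (rsubq (fun _ => True) (aR_plus_ra a))).
Proof.
move=> _ _ [y Hy] _ Hp2.
have [q [u [k0 [hqq [hqa [hqk [hq1 hk0]]]]]]] := @get_q R a Hp2.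
apply: (@iso_core R a (1 - a ^+ 2) (a - a ^+ 3) y q u k0) => //.
- by rewrite mulrBr mulr1 -exprS.
- by rewrite mulrBl mul1r -exprSr.
- by rewrite -expr2 addrC subrK.
Qed.
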